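(* For all integers $m\geq 1$ and $q\geq 1$, the graph $m*Q_q$ divides $Q_{mq}$.
   Context: $Q_q$ denotes the $q$-dimensional hypercube graph (vertices are $q$-tuples of $0$'s and $1$'s, adjacent iff they differ in exactly one coordinate). For a graph $G$ and positive integer $m$, the $m$-stretch $m*G$ is the graph obtained from $G$ by replacing each edge by a path of length $m$ (with $m$ edges), these paths being internally vertex-disjoint. For graphs $H$ and $G$, ''$H$ divides $G$'' means there is a collection of subgraphs $H_i$ of $G$, each isomorphic to $H$, such that $E(G)$ is the disjoint union of the edge sets $E(H_i)$. *)

(* Defs.v *)
(* Finite simple graphs are given as a finType of vertices
   together with a (symmetric, irreflexive) boolean adjacency relation. *)
From mathcomp Require Import all_boot.
Set Implicit Arguments. Unset Strict Implicit. Unset Printing Implicit Defensive.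

Definition cube_vert (q : nat) : finType := {ffun 'I_q -> bool}.

Definition cube_adj (q : nat) : rel (cube_vert q) :=
  fun x y => #|[set i : 'I_q | x i != y i]| == 1.

(* Raw vertices: original vertices (inl v), and internal vertices
   inr (u, v, k) = k-th internal vertex (1 <= k <= m-1) of the path replacing
   the edge uv, where each edge is represented once by u before v in the
   enumeration order of V. *)
Definition stretch_raw (V : finType) (m : nat) : finType :=
  (V + (V * V * 'I_m.+1))%type.

Definition stretch_valid (V : finType) (e : rel V) (m : nat)
  (x : stretch_raw V m) : bool :=
  match x with
  | inl _ => true
  | inr (u, v, k) => [&& e u v, enum_rank u < enum_rank v, 0 < k & k < m]
  end.

Definition stretch_vert (V : finType) (e : rel V) (m : nat) : finType :=
  {x : stretch_raw V m | stretch_valid e x}.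

Definition stretch_pt (V : finType) (m : nat) (u v : V) (k : nat)
  : stretch_raw V m :=
  if k == 0 then inl u else if k == m then inl v else inr (u, v, inord k).

Definition stretch_adj (V : finType) (e : rel V) (m : nat)
  : rel (stretch_vert e m) :=
  fun x y =>
    [exists u : V, exists v : V, exists k : 'I_m,
      [&& e u v, enum_rank u < enum_rank v &
        ((val x == stretch_pt m u v k) && (val y == stretch_pt m u v k.+1))
        || ((val y == stretch_pt m u v k) && (val x == stretch_pt m u v k.+1))]].

Definition edge_set (V : finType) (e : rel V) : {set {set V}} :=
  [set s : {set V} | [exists x : V, exists y : V, e x y && (s == [set x; y])]].

Definition img_edges (VH VG : finType) (eH : rel VH) (f : VH -> VG)
  : {set {set VG}} :=
  [set s : {set VG} |
    [exists x : VH, exists y : VH, eH x y && (s == [set f x; f y])]].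

(* H divides G: there are finitely many subgraphs H_i of G, each isomorphic
   to H (H_i = image of an injective edge-preserving map F i, with edge set
   exactly the image of E(H)), whose edge sets partition E(G). *)
Definition divides (VH VG : finType) (eH : rel VH) (eG : rel VG) : Prop :=
  exists (k : nat) (F : 'I_k -> VH -> VG),
    [/\ forall i, injective (F i),
        forall i x y, eH x y -> eG (F i x) (F i y),
        forall i j, i != j -> [disjoint img_edges eH (F i) & img_edges eH (F j)]
      & edge_set eG = \bigcup_(i < k) img_edges eH (F i)].

Arguments cube_adj q : clear implicits.
Arguments stretch_adj {V} e m.

(* Main.v *)
Require Import Defs.
From mathcomp Require Import all_boot zify.
Set Implicit Arguments. Unset Strict Implicit. Unset Printing Implicit Defensive.


Definition flip (T : finType) (y : {ffun T -> bool}) (a : T) : {ffun T -> bool} :=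
  [ffun i => y i (+) (i == a)].

Lemma flipK (T : finType) (y : {ffun T -> bool}) a : flip (flip y a) a = y.
Proof. by apply/ffunP=> i; rewrite !ffunE -addbA addbb addbF. Qed.

Lemma flip_inj2 (T : finType) (y : {ffun T -> bool}) a b :
  flip (flip y a) b = y -> a = b.
Proof.
move/ffunP/(_ a); rewrite !ffunE eqxx.
by case: (y a); case: eqP => // ->.
Qed.

Lemma flip_inj (T : finType) (y : {ffun T -> bool}) a b :
  flip y a = flip y b -> a = b.
Proof. by move=> h; apply: (@flip_inj2 _ (flip y a)); rewrite flipK h. Qed.

Lemma diff_flip (T : finType) (y : {ffun T -> bool}) a :
  [set i | y i != flip y a i] = [set a].
Proof.
apply/setP=> i; rewrite !inE ffunE.
by case: (y i); case: (i == a).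
Qed.

Lemma adjP (k : nat) (u v : {ffun 'I_k -> bool}) :
  cube_adj k u v <-> exists a, v = flip u a.
Proof.
split.
  rewrite /cube_adj => /cards1P [a ha]; exists a.
  apply/ffunP=> i; rewrite ffunE.
  move/setP: ha => /(_ i); rewrite !inE.
  by case: (u i); case: (v i); case: (i == a).
by case=> a ->; rewrite /cube_adj diff_flip cards1.
Qed.

Lemma adj_flip (k : nat) (u : {ffun 'I_k -> bool}) a : cube_adj k u (flip u a).
Proof. by apply/adjP; exists a. Qed.

Lemma adj_sym (k : nat) (u v : {ffun 'I_k -> bool}) : cube_adj k u v -> cube_adj k v u.
Proof. by case/adjP=> a ->; apply/adjP; exists a; rewrite flipK. Qed.

Definition par (T : finType) (c : {ffun T -> bool}) := \big[addb/false]_(i : T) c i.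

Lemma iter_addb k : iter k (addb true) false = odd k.
Proof. by elim: k => //= k ->. Qed.

Lemma big_addb_card (T : finType) (B : pred T) :
  \big[addb/false]_(i : T) B i = odd #|[pred i | B i]|.
Proof.
rewrite -iter_addb -big_const.
rewrite [RHS]big_mkcond /=; apply: eq_bigr => i _.
by rewrite inE; case: (B i).
Qed.

Lemma big_addb_split (T : finType) (f g : T -> bool) :
  \big[addb/false]_(i : T) (f i (+) g i) =
  \big[addb/false]_(i : T) f i (+) \big[addb/false]_(i : T) g i.
Proof. by rewrite big_split. Qed.

Lemma big_addb_one (T : finType) (a : T) :
  \big[addb/false]_(i : T) (i == a) = true.
Proof.
rewrite (bigD1 a) //= eqxx big1 // => i /negbTE ->; done.
Qed.

Lemma par_flip (T : finType) (y : {ffun T -> bool}) a : par (flip y a) = ~~ par y.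
Proof.
rewrite /par (eq_bigr (fun i => y i (+) (i == a))); last by move=> i _; rewrite ffunE.
by rewrite big_addb_split big_addb_one addbT.
Qed.

Lemma big_addb_true k : \big[addb/false]_(i < k) true = odd k.
Proof. by elim: k => [|k IH]; rewrite ?big_ord0 // big_ord_recr /= IH addbT. Qed.

Lemma big_addb_ne0 p : \big[addb/false]_(i < p.+1) (i != ord0) = odd p.
Proof.
rewrite big_ord_recl /= -big_addb_true; apply: eq_bigr => i _.
done.
Qed.


Section Cons.
Variables p q : nat.
Local Notation n := p.+1.
Local Notation N := (n * q).
Local Notation Vq := {ffun 'I_q -> bool}.
Local Notation VN := {ffun 'I_N -> bool}.

Lemma col_proof (i : 'I_N) : i %/ n < q.
Proof. have := ltn_ord i; rewrite ltn_divLR // [q * n]mulnC; exact. Qed.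
Definition col (i : 'I_N) : 'I_q := Ordinal (col_proof i).
Definition lay (i : 'I_N) : 'I_n := Ordinal (ltn_pmod i (ltn0Sn p)).
Lemma idx_proof (j : 'I_q) (l : 'I_n) : j * n + l < N.
Proof.
have := ltn_ord j; have := ltn_ord l => hl hj.
apply: (@leq_trans (j * n + n)); first by rewrite ltn_add2l.
by rewrite -mulSnr mulnC leq_mul2l hj orbT.
Qed.
Definition idx (j : 'I_q) (l : 'I_n) : 'I_N := Ordinal (idx_proof j l).

Lemma col_idx j l : col (idx j l) = j.
Proof. by apply: val_inj; rewrite /= divnMDl // divn_small // addn0. Qed.
Lemma lay_idx j l : lay (idx j l) = l.
Proof. by apply: val_inj; rewrite /= modnMDl modn_small. Qed.
Lemma idx_col_lay i : idx (col i) (lay i) = i.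
Proof. by apply: val_inj; rewrite /= -divn_eq. Qed.
Lemma idx_inj j l j' l' : idx j l = idx j' l' -> j = j' /\ l = l'.
Proof.
move=> h; split; [have := col_idx j l | have := lay_idx j l];
  by rewrite h ?col_idx ?lay_idx.
Qed.
Lemma idxE j l i : (i == idx j l) = (col i == j) && (lay i == l).
Proof.
apply/idP/idP => [/eqP ->|/andP [/eqP <- /eqP <-]]; first by rewrite col_idx lay_idx !eqxx.
by rewrite idx_col_lay.
Qed.

(* rank of a layer in the flip order *)
Definition rk (b : bool) (l : 'I_n) : nat :=
  if b then (if l == ord0 then p else l.-1) else l.
Definition inP b lam (l : 'I_n) := rk b l < lam.

Lemma rk_lt b l : rk b l < n.
Proof.
rewrite /rk; case: b; last exact: ltn_ord.
case: eqP => // _; have := ltn_ord l; case: (nat_of_ord l) => //= k; lia.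
Qed.

Lemma rk_inj b : injective (rk b).
Proof.
move=> l1 l2; rewrite /rk; case: b; last exact: val_inj.
have h1 := ltn_ord l1; have h2 := ltn_ord l2.
case: eqP => [->|/eqP n1]; case: eqP => [->|/eqP n2] //.
- move=> h; exfalso; move: n2 h h2; rewrite -val_eqE /=; lia.
- move=> h; exfalso; move: n1 h h1; rewrite -val_eqE /=; lia.
move: n1 n2; rewrite -!val_eqE /= => /eqP n1 /eqP n2 h; apply: val_inj => /=; lia.
Qed.

Lemma rk_onto b r : r < n -> exists l, rk b l = r.
Proof.
move=> hr; case: b.
  case: (ltnP r p) => h.
    have h' : r.+1 < n by [].
    by exists (Ordinal h'); rewrite /rk.
  by exists ord0; rewrite /rk eqxx; apply/eqP; rewrite eqn_leq h -ltnS hr.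
by exists (Ordinal hr).
Qed.

Lemma inP0 b l : inP b 0 l = false.
Proof. by []. Qed.
Lemma inPn b l : inP b n l = true.
Proof. exact: rk_lt. Qed.
Lemma inP_step b lam l : inP b lam l (+) inP b lam.+1 l = (rk b l == lam).
Proof.
rewrite /inP; case: (ltngtP (rk b l) lam) => h.
- by rewrite ltnS ltnW.
- by rewrite ltnS leqNgt h.
- by rewrite h ltnSn.
Qed.

Definition L b (c : VN) (x : Vq) (j : 'I_q) (lam : nat) : VN :=
  [ffun i => if col i == j then c i (+) inP b lam (lay i) else x (col i) (+) c i].

Lemma L_step b c x j lam l : rk b l = lam ->
  L b c x j lam.+1 = flip (L b c x j lam) (idx j l).
Proof.
move=> hl; apply/ffunP => i; rewrite !ffunE idxE.
case: (col i == j) => //=; last by rewrite addbF.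
rewrite -(inj_eq (@rk_inj b)) hl -inP_step.
by case: (c i); case: (inP b lam (lay i)); case: (inP b lam.+1 (lay i)).
Qed.

Lemma L_indep b c (x x' : Vq) (j : 'I_q) lam : (forall j', j' != j -> x j' = x' j') ->
  L b c x j lam = L b c x' j lam.
Proof.
move=> h; apply/ffunP => i; rewrite !ffunE.
by case: eqP => // /eqP /h ->.
Qed.

Definition Hraw b (c : VN) (u v : Vq) (k : nat) : VN :=
  [ffun i => if u (col i) == v (col i) then u (col i) (+) c i
             else c i (+) inP b (if u (col i) then n - k else k) (lay i)].

Lemma H_L b c u j k :
  Hraw b c u (flip u j) k = L b c u j (if u j then n - k else k).
Proof.
apply/ffunP => i; rewrite !ffunE.
case: (boolP (col i == j)) => [/eqP ->|hne]; first by case: (u j).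
by rewrite addbF eqxx.
Qed.

Definition Fraw b (c : VN) (r : stretch_raw (cube_vert q) n) : VN :=
  match r with
  | inl x => Hraw b c x x 0
  | inr (u, v, k) => Hraw b c u v k
  end.

Lemma Fraw_pt b c u v k : k <= n ->
  Fraw b c (stretch_pt n u v k) = Hraw b c u v k.
Proof.
move=> hk; rewrite /stretch_pt.
case: eqP => [->|k0].
  apply/ffunP => i; rewrite !ffunE eqxx.
  case: eqP => // _.
  by case: (u (col i)); rewrite /= ?subn0 ?inPn ?inP0 ?addbT ?addbF.
case: eqP => [->|kn].
  apply/ffunP => i; rewrite !ffunE eqxx.
  case: eqP => [-> //|]; case: (u (col i)); case: (v (col i)) => //= _;
  by rewrite ?subnn ?inPn ?inP0 ?addbT ?addbF.
by rewrite /= inordK // ltnS.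
Qed.
End Cons.


Section Cons2.
Variables p q : nat.
Local Notation n := p.+1.
Local Notation N := (n * q).
Local Notation Vq := {ffun 'I_q -> bool}.
Local Notation VN := {ffun 'I_N -> bool}.
Local Notation SV := (stretch_vert (cube_adj q) n).
Local Notation L := (@L p q).
Local Notation Fraw := (@Fraw p q).

Definition Fbc b (c : VN) (x : SV) : VN := Fraw b c (val x).

Lemma Fpt b c (u : Vq) j k : k <= n ->
  Fraw b c (stretch_pt n u (flip u j) k) = L b c u j (if u j then n - k else k).
Proof. by move=> hk; rewrite Fraw_pt // H_L. Qed.

Lemma adj_edge b c (x y : SV) : stretch_adj (cube_adj q) n x y ->
  exists x0 j lam, lam < n /\
   ((Fbc b c x = L b c x0 j lam /\ Fbc b c y = L b c x0 j lam.+1) \/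
    (Fbc b c x = L b c x0 j lam.+1 /\ Fbc b c y = L b c x0 j lam)).
Proof.
case/existsP => u /existsP [v /existsP [k /and3P [/adjP [j ->] _ hor]]].
have hk := ltn_ord k.
have e1 : Fraw b c (stretch_pt n u (flip u j) k) = L b c u j (if u j then n - k else k).
  by apply: Fpt; apply: ltnW.
have e2 : Fraw b c (stretch_pt n u (flip u j) k.+1) =
          L b c u j (if u j then n - k.+1 else k.+1) by apply: Fpt.
exists u, j, (if u j then n - k.+1 else k); split.
  by case: (u j); lia.
have E : (if u j then n - k else k) = (if u j then (n - k.+1).+1 else k) by case: (u j); lia.
rewrite /Fbc.
case/orP: hor => /andP [/eqP -> /eqP ->]; rewrite e1 e2 E; case: (u j); by [left | right].
Qed.

Lemma adj_edge_cube b c (x y : SV) : stretch_adj (cube_adj q) n x y ->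
  cube_adj N (Fbc b c x) (Fbc b c y).
Proof.
case/(adj_edge b c) => x0 [j [lam [hl [[-> ->]|[-> ->]]]]];
have [l hl'] := rk_onto b hl.
- by rewrite (L_step _ _ _ hl'); apply: adj_flip.
- by rewrite (L_step _ _ _ hl'); apply: adj_sym; apply: adj_flip.
Qed.

Lemma img_sub b c s : s \in img_edges (stretch_adj (cube_adj q) n) (Fbc b c) ->
  exists x j lam, lam < n /\ s = [set L b c x j lam; L b c x j lam.+1].
Proof.
rewrite inE => /existsP [x /existsP [y /andP [hxy /eqP ->]]].
case: (adj_edge b c hxy) => x0 [j [lam [hl [[-> ->]|[-> ->]]]]];
  exists x0, j, lam; split => //; exact: setUC.
Qed.

Lemma sp_valid (u v : Vq) k : cube_adj q u v -> enum_rank u < enum_rank v -> k <= n ->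
  stretch_valid (cube_adj q) (stretch_pt n u v k).
Proof.
move=> huv hr hk; rewrite /stretch_pt.
case: eqP => // k0; case: eqP => // kn /=.
rewrite huv hr inordK ?ltnS //=; lia.
Qed.

Definition sp (u v : Vq) k (huv : cube_adj q u v) (hr : enum_rank u < enum_rank v)
  (hk : k <= n) : SV := exist _ (stretch_pt n u v k) (sp_valid huv hr hk).

Lemma sp_adj (u v : Vq) k (huv : cube_adj q u v) (hr : enum_rank u < enum_rank v)
  (hk : k < n) (hk1 : k <= n) (hk2 : k.+1 <= n) :
  stretch_adj (cube_adj q) n (sp huv hr hk1) (sp huv hr hk2).
Proof.
apply/existsP; exists u; apply/existsP; exists v; apply/existsP; exists (Ordinal hk).
by rewrite huv hr /= !eqxx.
Qed.

Lemma img_sup b c (x : Vq) j lam : lam < n ->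
  [set L b c x j lam; L b c x j lam.+1] \in
    img_edges (stretch_adj (cube_adj q) n) (Fbc b c).
Proof.
move=> hl.
pose x0 : Vq := [ffun i => if i == j then false else x i].
pose x1 := flip x0 j.
have Lx0 : forall lam', L b c x j lam' = L b c x0 j lam'.
  by move=> lam'; apply: L_indep => j' hj'; rewrite ffunE (negbTE hj').
have Lx1 : forall lam', L b c x j lam' = L b c x1 j lam'.
  by move=> lam'; apply: L_indep => j' hj'; rewrite !ffunE (negbTE hj') addbF.
have x0j : x0 j = false by rewrite ffunE eqxx.
have x1j : x1 j = true by rewrite ffunE x0j eqxx.
have hne : enum_rank x0 != enum_rank x1.
  apply/negP => /eqP /enum_rank_inj /ffunP /(_ j); by rewrite x0j x1j.
rewrite inE; case: (ltngtP (enum_rank x0) (enum_rank x1)) => hr; last by rewrite (ord_inj hr) eqxx in hne.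
- have a01 : cube_adj q x0 x1 by apply: adj_flip.
  have h1 : lam <= n by apply: ltnW.
  apply/existsP; exists (sp a01 hr h1); apply/existsP; exists (sp a01 hr hl).
  rewrite sp_adj //= /Fbc /= /x1 !Fpt // x0j -!Lx0 //.
- have a10 : cube_adj q x1 x0 by apply: adj_sym; apply: adj_flip.
  have ex0 : x0 = flip x1 j by rewrite flipK.
  have hk : n - lam.+1 < n by lia.
  have h1 : n - lam.+1 <= n by lia.
  have h2 : (n - lam.+1).+1 <= n by lia.
  apply/existsP; exists (sp a10 hr h1); apply/existsP; exists (sp a10 hr h2).
  rewrite sp_adj //= /Fbc /=.
  have E : forall k, k <= n -> Fraw b c (stretch_pt n x1 x0 k) = L b c x j (n - k).
    by move=> k hk'; rewrite {1}ex0 Fpt // x1j -Lx1.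
  rewrite !E //; apply/eqP.
  have -> : n - (n - lam.+1) = lam.+1 by lia.
  have -> : n - (n - lam.+1).+1 = lam by lia.
  by rewrite setUC.
Qed.
End Cons2.


Section Cons3.
Variables p q : nat.
Local Notation n := p.+1.
Local Notation N := (n * q).
Local Notation Vq := {ffun 'I_q -> bool}.
Local Notation VN := {ffun 'I_N -> bool}.
Local Notation SV := (stretch_vert (cube_adj q) n).
Local Notation L := (@L p q).
Local Notation Fraw := (@Fraw p q).
Local Notation col := (@col p q).
Local Notation lay := (@lay p q).
Local Notation idx := (@idx p q).
Local Notation inP := (@inP p).
Local Notation rk := (@rk p).

Definition Orig (c : VN) (x : Vq) : VN := [ffun i => x (col i) (+) c i].

Lemma Fraw_rep b c (r : stretch_raw (cube_vert q) n) : stretch_valid (cube_adj q) r ->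
  (exists x, r = inl x /\ Fraw b c r = Orig c x) \/
  (exists u j k, r = inr (u, flip u j, k) /\ enum_rank u < enum_rank (flip u j) /\
     0 < k < n /\ Fraw b c r = L b c u j (if u j then n - k else k)).
Proof.
case: r => [x _|[[u v] k]] /=.
  left; exists x; split => //; apply/ffunP => i; rewrite !ffunE eqxx //.
case/and4P => /adjP [j ->] hr h0 hn; right; exists u, j, k; split => //.
by rewrite hr h0 hn H_L.
Qed.

Lemma LE b c x j lam j' l :
  L b c x j lam (idx j' l) = if j' == j then c (idx j' l) (+) inP b lam l
                             else x j' (+) c (idx j' l).
Proof. by rewrite ffunE col_idx lay_idx. Qed.

Lemma OE c x j' l : Orig c x (idx j' l) = x j' (+) c (idx j' l).
Proof. by rewrite ffunE col_idx. Qed.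

Lemma nonconst b lam : 0 < lam < n ->
  exists l1 l2, inP b lam l1 = true /\ inP b lam l2 = false.
Proof.
case/andP => h0 hn.
have [l1 e1] := rk_onto b (ltn0Sn p); have [l2 e2] := rk_onto b hn.
by exists l1, l2; rewrite /inP e1 e2 ltnn h0.
Qed.

Lemma inP_inj b lam1 lam2 : lam1 <= n -> lam2 <= n ->
  (forall l, inP b lam1 l = inP b lam2 l) -> lam1 = lam2.
Proof.
move=> h1 h2 h; case: (ltngtP lam1 lam2) => // hlt.
- have [l e] := rk_onto b (leq_trans hlt h2).
  by have := h l; rewrite /inP e ltnn hlt.
- have [l e] := rk_onto b (leq_trans hlt h1).
  by have := h l; rewrite /inP e ltnn hlt.
Qed.

Lemma no_mix b (c : VN) (x u : Vq) j lam : 0 < lam < n -> Orig c x <> L b c u j lam.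
Proof.
move=> hl e; have [l1 [l2 [e1 e2]]] := nonconst b hl.
have := congr1 (fun w : VN => w (idx j l1)) e; have := congr1 (fun w : VN => w (idx j l2)) e.
rewrite /= !OE !LE eqxx e1 e2.
by case: (x j); case: (c (idx j l1)); case: (c (idx j l2)).
Qed.

Lemma Fbc_inj b (c : VN) : (forall j, c (idx j ord0) = false) -> injective (Fbc b c).
Proof.
move=> cn [r1 v1] [r2 v2]; rewrite /Fbc /= => e; apply: val_inj => /=.
case: (Fraw_rep b c v1) => [[a1 [E1 e1]]|[u1 [j1 [k1 [E1 [o1 [hk1 e1]]]]]]];
case: (Fraw_rep b c v2) => [[a2 [E2 e2]]|[u2 [j2 [k2 [E2 [o2 [hk2 e2]]]]]]];
rewrite e1 e2 in e; rewrite E1 E2.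
- congr inl; apply/ffunP => j.
  have := congr1 (fun w : VN => w (idx j ord0)) e; rewrite /= !OE cn.
  by rewrite !addbF.
- exfalso; apply: (no_mix _ e); case: (u2 j2); lia.
- exfalso; apply: (no_mix _ (esym e)); case: (u1 j1); lia.
set lam1 := (if u1 j1 then n - k1 else k1) in e.
set lam2 := (if u2 j2 then n - k2 else k2) in e.
have hl1 : 0 < lam1 < n by rewrite /lam1; case: (u1 j1); lia.
have hl2 : 0 < lam2 < n by rewrite /lam2; case: (u2 j2); lia.
have ej : j1 = j2.
  apply/eqP; apply/negP => /negP hne.
  have [l1 [l2 [f1 f2]]] := nonconst b hl1.
  have := congr1 (fun w : VN => w (idx j1 l1)) e; have := congr1 (fun w : VN => w (idx j1 l2)) e.
  rewrite /= !LE eqxx (negbTE hne) f1 f2.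
  by case: (u2 j1); case: (c (idx j1 l1)); case: (c (idx j1 l2)).
subst j2.
have el : lam1 = lam2.
  apply: (@inP_inj b); [lia|lia|] => l.
  have := congr1 (fun w : VN => w (idx j1 l)) e; rewrite /= !LE eqxx.
  by case: (c (idx j1 l)); case: (inP b lam1 l); case: (inP b lam2 l).
have eu : forall j', j' != j1 -> u1 j' = u2 j'.
  move=> j' hj'; have := congr1 (fun w : VN => w (idx j' ord0)) e.
  by rewrite /= !LE (negbTE hj') cn !addbF.
case: (boolP (u1 j1 == u2 j1)) => [/eqP hj|hj].
  have eu12 : u1 = u2.
    apply/ffunP => j'; case: (boolP (j' == j1)) => [/eqP -> //|]; exact: eu.
  subst u2; congr inr; congr pair; apply: ord_inj.
  move: el; rewrite /lam1 /lam2; case: (u1 j1); have := ltn_ord k1; have := ltn_ord k2; lia.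
exfalso.
have eu2 : u2 = flip u1 j1.
  apply/ffunP => j'; rewrite ffunE; case: (boolP (j' == j1)) => [/eqP ->|hj'].
    by move: hj; case: (u1 j1); case: (u2 j1).
  by rewrite addbF eu.
have ef : flip u2 j1 = u1 by rewrite eu2 flipK.
rewrite ef eu2 in o2.
by have := ltn_trans o1 o2; rewrite ltnn.
Qed.
End Cons3.


Section Cons4.
Variables p q : nat.
Local Notation n := p.+1.
Local Notation N := (n * q).
Local Notation Vq := {ffun 'I_q -> bool}.
Local Notation VN := {ffun 'I_N -> bool}.
Local Notation L := (@L p q).
Local Notation col := (@col p q).
Local Notation lay := (@lay p q).
Local Notation idx := (@idx p q).
Local Notation inP := (@inP p).
Local Notation rk := (@rk p).

Definition valid (bc : bool * VN) : bool :=
  [forall j : 'I_q, bc.2 (idx j ord0) == false] && (par bc.2 == (bc.1 && odd n)).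

Lemma par_col (c1 c2 : VN) j : (forall i, col i != j -> c1 i = c2 i) ->
  par c1 = par c2 (+) \big[addb/false]_(l < n) (c1 (idx j l) (+) c2 (idx j l)).
Proof.
move=> h; rewrite /par (eq_bigr (fun i => c2 i (+) (c1 i (+) c2 i))); last first.
  by move=> i _; case: (c1 i); case: (c2 i).
rewrite big_addb_split; congr addb.
rewrite !big_addb_card; congr odd.
have -> : #|[pred i | c1 i (+) c2 i]| =
          #|[set idx j l | l in [pred l | c1 (idx j l) (+) c2 (idx j l)]]|.
  apply: eq_card => i; rewrite !inE; apply/idP/imsetP.
    move=> hi; exists (lay i); last first.
      case: (boolP (col i == j)) => [/eqP <-|hj]; first by rewrite idx_col_lay.
      by rewrite h // addbb in hi.
    rewrite inE; case: (boolP (col i == j)) => [/eqP <-|hj]; first by rewrite idx_col_lay.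
    by rewrite h // addbb in hi.
  by case=> l hl ei; rewrite ei; rewrite inE in hl.
rewrite card_imset; last by move=> l1 l2 /idx_inj [].
by apply: eq_card => l; rewrite !inE.
Qed.

Lemma set2_eq (T : finType) (a b c d : T) : [set a; b] = [set c; d] ->
  (a = c /\ b = d) \/ (a = d /\ b = c).
Proof.
move=> e.
have ha : a \in [set c; d] by rewrite -e !inE eqxx.
have hb : b \in [set c; d] by rewrite -e !inE eqxx orbT.
have hc : c \in [set a; b] by rewrite e !inE eqxx.
have hd : d \in [set a; b] by rewrite e !inE eqxx orbT.
move: ha hb hc hd; rewrite !inE.
do 4 (case/orP => /eqP ?); subst; by [left|right].
Qed.

Lemma rk_false l : rk false l = l. Proof. by []. Qed.
Lemma inP_true_p l : inP true p l = (l != ord0).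
Proof.
rewrite /inP /rk -!val_eqE /=; case: l => [[|k] hk] //=; rewrite ?ltnn //.
Qed.

Lemma uniq_copy b1 c1 b2 c2 x1 x2 j1 j2 lam1 lam2 :
  valid (b1, c1) -> valid (b2, c2) -> lam1 < n -> lam2 < n ->
  [set L b1 c1 x1 j1 lam1; L b1 c1 x1 j1 lam1.+1] =
  [set L b2 c2 x2 j2 lam2; L b2 c2 x2 j2 lam2.+1] -> (b1, c1) = (b2, c2).
Proof.
case/andP => /forallP n1 /eqP p1; case/andP => /forallP n2 /eqP p2.
have {}n1 : forall j, c1 (idx j ord0) = false by move=> j; apply/eqP.
have {}n2 : forall j, c2 (idx j ord0) = false by move=> j; apply/eqP.
move=> h1 h2.
have [l1 e1] := rk_onto b1 h1; have [l2 e2] := rk_onto b2 h2.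
rewrite (L_step _ _ _ e1) (L_step _ _ _ e2) => /set2_eq H.
have [lam2' [hl2' EQ]] : exists lam2', (lam2' = lam2 \/ lam2' = lam2.+1) /\
   L b1 c1 x1 j1 lam1 = L b2 c2 x2 j2 lam2'.
  case: H => [[E _]|[E _]]; [exists lam2|exists lam2.+1]; split; auto.
  by rewrite E (L_step _ _ _ e2).
have ei : idx j1 l1 = idx j2 l2.
  case: H => [[E1 E2]|[E1 E2]].
    by rewrite E1 in E2; apply: flip_inj E2.
  by apply: (@flip_inj2 _ (L b1 c1 x1 j1 lam1)); rewrite E2 E1.
case: (idx_inj ei) => ej el; subst j2 l2; clear ei H.
set j := j1 in EQ n1 n2 *.
have off : forall i, col i != j -> c1 i = c2 i.
  move=> i hi.
  have := congr1 (fun w : VN => w (idx (col i) ord0)) EQ; rewrite /= !LE (negbTE hi) n1 n2 !addbF => ex.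
  have := congr1 (fun w : VN => w i) EQ; rewrite /= !ffunE (negbTE hi) ex => ey.
  by move: ey; case: (x2 (col i)); case: (c1 i); case: (c2 i).
have onj : forall l, c1 (idx j l) (+) c2 (idx j l) = inP b1 lam1 l (+) inP b2 lam2' l.
  move=> l; have := congr1 (fun w : VN => w (idx j l)) EQ; rewrite /= !LE eqxx => ex.
  by move: ex; case: (c1 (idx j l)); case: (c2 (idx j l)); case: (inP b1 lam1 l); case: (inP b2 lam2' l).
have P := par_col off; rewrite (eq_bigr _ (fun l _ => onj l)) p1 p2 in P.
have h0 := onj ord0; rewrite n1 n2 /= in h0.
suff [eb ei] : b1 = b2 /\ forall l, inP b1 lam1 l = inP b2 lam2' l.
  rewrite -eb; congr pair; apply/ffunP => i.
  case: (boolP (col i == j)) => [/eqP hi|hi]; last exact: off.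
  have := onj (lay i); rewrite ei addbb -hi idx_col_lay.
  by case: (c1 i); case: (c2 i).
clear EQ onj p1 p2; case: b1 b2 e1 e2 h0 P => [] [] e1 e2 h0 P.
-
  have e : lam1 = lam2 by rewrite -e1 -e2.
  rewrite -e in hl2'; case: hl2' => E; rewrite E /= in P *; first by split.
  exfalso; rewrite (eq_bigr (fun l => l == l1)) ?big_addb_one /= in P.
    by case: (odd p) P.
  by move=> l _; rewrite inP_step -e1 (inj_eq (@rk_inj p true)).
-
  exfalso; move: h0; rewrite /inP /rk eqxx /= (ltnNge p lam1) -ltnS h1 /=.
  case: hl2' => E; rewrite E in P * => //; move/esym/negbT; rewrite -leqNgt leqn0 => /eqP el2.
  move: e2; rewrite el2 rk_false => /eqP; rewrite -[_ == 0]/(l1 == ord0) => /eqP el1.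
  move: e1; rewrite el1 /rk eqxx => el.
  rewrite (eq_bigr (fun l => l != ord0)) ?big_addb_ne0 /= in P; last first.
    by move=> l _; rewrite -el inP_true_p /inP /= el2 ltn0 addbF.
  by move: P; case: (odd p).
-
  exfalso; move: h0; rewrite /inP /rk eqxx /=.
  case: hl2' => E; rewrite E in P *.
    have -> : (p < lam2) = false by rewrite ltnNge -ltnS h2.
    rewrite addbF => /esym/negbT; rewrite -leqNgt leqn0 => /eqP el1.
    move: e1; rewrite el1 rk_false => /eqP; rewrite -[_ == 0]/(l1 == ord0) => /eqP ell.
    move: e2; rewrite ell /rk eqxx => el2.
    rewrite (eq_bigr (fun l => l != ord0)) ?big_addb_ne0 /= in P; last first.
      by move=> l _; rewrite -el2 inP_true_p el1 /inP ltn0.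
    by move: P; case: (odd p).
  move: e1 e2; case: l1 => [[|k] hk]; rewrite /rk -val_eqE /= => <- <-.
    by rewrite ltnSn.
  case: (ltnP p k.+1) => h //=; lia.
-
  have e : lam1 = lam2 by rewrite -e1 -e2.
  rewrite -e in hl2'; case: hl2' => E; rewrite E /= in P *; first by split.
  exfalso; rewrite (eq_bigr (fun l => l == l1)) ?big_addb_one /= in P.
    by case: (odd p) P.
  by move=> l _; rewrite inP_step -e1 (inj_eq (@rk_inj p false)).
Qed.
End Cons4.


Section Cons5.
Variables p q : nat.
Local Notation n := p.+1.
Local Notation N := (n * q).
Local Notation Vq := {ffun 'I_q -> bool}.
Local Notation VN := {ffun 'I_N -> bool}.
Local Notation L := (@L p q).
Local Notation col := (@col p q).
Local Notation lay := (@lay p q).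
Local Notation idx := (@idx p q).
Local Notation inP := (@inP p).
Local Notation rk := (@rk p).
Local Notation valid := (@valid p q).

Definition cc (j : 'I_q) (t : 'I_n) b (y : VN) : VN :=
  [ffun i => y i (+) (if col i == j then inP b (rk b t) (lay i) else y (idx (col i) ord0))].
Definition xx (y : VN) : Vq := [ffun j' => y (idx j' ord0)].

Lemma cc_L0 j t b y : L b (cc j t b y) (xx y) j (rk b t) = y.
Proof.
apply/ffunP => i; rewrite !ffunE; case: (col i == j).
  by rewrite -addbA addbb addbF.
  by case: (y i); case: (y (idx (col i) ord0)).
Qed.

Lemma cc_L1 j t b y : L b (cc j t b y) (xx y) j (rk b t).+1 = flip y (idx j t).
Proof. by rewrite (L_step _ _ _ (erefl (rk b t))) cc_L0. Qed.

Lemma cc_norm j t b (y : VN) : y (idx j ord0) = inP b (rk b t) ord0 ->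
  forall j', cc j t b y (idx j' ord0) = false.
Proof.
move=> h j'; rewrite ffunE col_idx lay_idx.
case: eqP => [->|_]; first by rewrite h addbb.
by rewrite addbb.
Qed.

Lemma cover_edge (w w' : VN) : cube_adj N w w' ->
  exists b c x j lam, valid (b, c) /\ lam < n /\
    [set w; w'] = [set L b c x j lam; L b c x j lam.+1].
Proof.
case/adjP => i0 ->.
set j := col i0; set t := lay i0.
have ei0 : i0 = idx j t by rewrite idx_col_lay.
have key : forall b y, (y = w \/ y = flip w i0) ->
    y (idx j ord0) = inP b (rk b t) ord0 ->
    par (cc j t b y) = (b && odd n) ->
    exists b c x j lam, valid (b, c) /\ lam < n /\
      [set w; flip w i0] = [set L b c x j lam; L b c x j lam.+1].
  move=> b y hy hn hp; exists b, (cc j t b y), (xx y), j, (rk b t).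
  split; first by rewrite /valid hp eqxx andbT; apply/forallP => j'; rewrite cc_norm.
  split; first exact: rk_lt.
  rewrite cc_L0 cc_L1 -ei0.
  case: hy => ->; first by [].
  by rewrite flipK setUC.
case: (boolP (t == ord0)) => [/eqP t0|tn0].
- pose y := if w i0 then flip w i0 else w.
  have hy : y = w \/ y = flip w i0 by rewrite /y; case: (w i0); auto.
  have yi0 : y i0 = false.
    by rewrite /y; case: (boolP (w i0)) => h; rewrite ?ffunE ?eqxx ?(negbTE h) //= h.
  pose b := par (cc j t false y).
  apply: (key b y hy).
    by rewrite -t0 -ei0 yi0 /inP t0 ltnn.
  rewrite /b; case: (boolP (par (cc j t false y))) => hb; last by rewrite (negbTE hb).
  rewrite (@par_col p q (cc j t true y) (cc j t false y) j); last first.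
    by move=> i hi; rewrite !ffunE (negbTE hi).
  rewrite hb (eq_bigr (fun l => l != ord0)) ?big_addb_ne0 //.
  move=> l _; rewrite !ffunE col_idx lay_idx eqxx t0.
  have -> : rk true ord0 = p by rewrite /rk eqxx.
  rewrite inP_true_p /inP /= ltn0.
  by case: (y (idx j l)); case: (l != ord0).
- pose b0 := ~~ w (idx j ord0).
  have nei : idx j ord0 != i0.
    by rewrite ei0; apply/negP => /eqP /idx_inj [_ /esym/eqP]; rewrite (negbTE tn0).
  have hn : forall y, (y = w \/ y = flip w i0) -> y (idx j ord0) = inP b0 (rk b0 t) ord0.
    move=> y [] ->; rewrite ?ffunE ?(negbTE nei) ?addbF /b0 /inP /rk;
    case: (w (idx j ord0)) => /=; rewrite ?eqxx ?(negbTE tn0);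
    move: tn0; rewrite -val_eqE /=; have := ltn_ord t; lia.
  have pf : par (cc j t b0 (flip w i0)) = ~~ par (cc j t b0 w).
    rewrite -(par_flip _ i0); congr par; apply/ffunP => i; rewrite !ffunE.
    case: (boolP (col i == j)) => hi; first by rewrite addbAC.
    have -> : (idx (col i) ord0 == i0) = false.
      by apply/negbTE/negP => /eqP e; move: hi; rewrite /j -e col_idx eqxx.
    by rewrite addbF addbAC.
  case: (boolP (par (cc j t b0 w) == (b0 && odd n))) => hp.
    apply: (key b0 w); first by left.
      by apply: hn; left.
    exact/eqP.
  apply: (key b0 (flip w i0)); first by right.
    by apply: hn; right.
  by rewrite pf; move: hp; case: (par _); case: (b0 && odd n).
Qed.
End Cons5.


Theorem theorem2 (m q : nat) :
  1 <= m -> 1 <= q ->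
  divides (stretch_adj (cube_adj q) m) (cube_adj (m * q)).
Proof.
case: m => [//|p] _ _.
pose I : finType := {bc : bool * {ffun 'I_(p.+1 * q) -> bool} | valid bc}.
exists #|I|, (fun i => Fbc (val (enum_val i)).1 (val (enum_val i)).2).
split.
- move=> i; apply: Fbc_inj => j.
  by have := valP (enum_val i); case/andP => /forallP /(_ j) /eqP.
- by move=> i x y; apply: adj_edge_cube.
- move=> i k hik; rewrite -setI_eq0; apply/eqP/setP => s; rewrite in_setI in_set0.
  apply/negP => /andP [/img_sub [x1 [j1 [l1 [h1 E1]]]]].
  case/img_sub => [x2 [j2 [l2 [h2 E2]]]].
  have := @uniq_copy p q (val (enum_val i)).1 (val (enum_val i)).2
    (val (enum_val k)).1 (val (enum_val k)).2 x1 x2 j1 j2 l1 l2.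
  rewrite -!surjective_pairing => /(_ (valP _) (valP _) h1 h2).
  rewrite -E1 -E2 => /(_ erefl) /val_inj /enum_val_inj ek.
  by rewrite ek eqxx in hik.
apply/setP => s; apply/idP/idP.
  rewrite inE => /existsP [w /existsP [w' /andP [hw /eqP ->]]].
  have [b [c [x [j [lam [hv [hl ->]]]]]]] := cover_edge hw.
  pose io : I := exist _ (b, c) hv.
  apply/bigcupP; exists (enum_rank io) => //.
  by rewrite enum_rankK /=; apply: img_sup.
case/bigcupP => i _ /img_sub [x [j [lam [hl ->]]]].
have [l el] := rk_onto (val (enum_val i)).1 hl.
rewrite (L_step _ _ _ el); set A := L _ _ _ _ _.
rewrite inE; apply/existsP; exists A; apply/existsP; exists (flip A (idx j l)).
by rewrite adj_flip eqxx.
Qed.
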